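(* Consider the max-min problem: maximize $t$ over $t$, $\mathbf{E}=(E_1,\dots,E_K)$, $\boldsymbol\tau=(\tau_0,\dots,\tau_K)$ subject to $R_i(E_i,\tau_i)\ge t$ for $i=1,\dots,K$, $\sum_{i=0}^K\tau_i\le 1$, $\sum_{i=1}^KE_i\le E_{max}$, $\tau_i\ge0$ for $i=0,\dots,K$, and $0\le E_i\le E_i^b+\eta_iP_Bh_i\tau_0$ for $i=1,\dots,K$. Then the optimal policy $(t^*,\mathbf E^*,\boldsymbol\tau^* )$ satisfies $R_i(E_i^*,\tau_i^* )=t^*$ for every $i=1,\dots,K$, i.e., all users achieve the same throughput.
   Context: Fix an integer $K\ge 1$ and positive constants $E_{max}$, $P_B$, and, for $i=1,\dots,K$, $E_i^b\ge 0$, $\eta_i\in(0,1)$, $h_i>0$, $g_i>0$, $\Gamma>0$, $\sigma^2>0$. Let $\alpha_i = g_i/(\Gamma\sigma^2)$. For $E_i\ge 0$, $\tau_i\ge 0$ define $R_i(E_i,\tau_i)=\tau_i\log_2\!\left(1+\alpha_i E_i/\tau_i\right)$ for $\tau_i>0$ and $R_i(E_i,0)=0$. *)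

(* Defs.v *)
From Stdlib Require Import Reals.
Open Scope R_scope.

Definition log2 (x : R) : R := ln x / ln 2.

(* R_i(E,tau) = tau log2(1 + a E / tau) for tau > 0, and 0 for tau = 0
   (also 0 for tau < 0, which never occurs for feasible points). *)
Definition rate (a E tau : R) : R :=
  if Rlt_dec 0 tau then tau * log2 (1 + a * E / tau) else 0.

Fixpoint sum1 (f : nat -> R) (n : nat) : R :=
  match n with
  | O => 0
  | S m => sum1 f m + f (S m)
  end.

(* Feasible set of the max-min problem.  Users are indexed 1..K;
   tau is indexed 0..K (tau 0 = harvesting time). *)
Definition feasible (K : nat) (Emax PB Gamma sigma2 : R)
    (Eb eta h g : nat -> R) (t : R) (E tau : nat -> R) : Prop :=
  (forall i, (1 <= i <= K)%nat ->
      rate (g i / (Gamma * sigma2)) (E i) (tau i) >= t) /\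
  tau 0%nat + sum1 tau K <= 1 /\
  sum1 E K <= Emax /\
  (forall i, (i <= K)%nat -> 0 <= tau i) /\
  (forall i, (1 <= i <= K)%nat ->
      0 <= E i /\ E i <= Eb i + eta i * PB * h i * tau 0%nat).

Definition optimal (K : nat) (Emax PB Gamma sigma2 : R)
    (Eb eta h g : nat -> R) (t : R) (E tau : nat -> R) : Prop :=
  feasible K Emax PB Gamma sigma2 Eb eta h g t E tau /\
  (forall t' E' tau', feasible K Emax PB Gamma sigma2 Eb eta h g t' E' tau' -> t' <= t).

(* Main.v *)
Require Import Defs.
From Stdlib Require Import Reals Lra Lia.
Open Scope R_scope.

Lemma ln_lt_sub1 u : 0 < u -> u <> 1 -> ln u < u - 1.
Proof.
  intros Hu H1.
  assert (Hy : ln u <> 0).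
  { intro E. apply H1. rewrite <- (exp_ln u Hu), E. apply exp_0. }
  pose proof (exp_ineq1 _ Hy) as H. rewrite exp_ln in H; lra.
Qed.

Lemma ln_le_sub1 u : 0 < u -> ln u <= u - 1.
Proof.
  intros Hu. destruct (Req_dec u 1) as [->|H].
  - rewrite ln_1; lra.
  - left; now apply ln_lt_sub1.
Qed.

Lemma key_mono c t t' : 0 < c -> 0 < t -> t < t' ->
  t * ln (1 + c / t) < t' * ln (1 + c / t').
Proof.
  intros Hc Ht Htt.
  set (A := 1 + c / t). set (B := 1 + c / t').
  assert (HA : 1 < A). { unfold A. assert (0 < c / t) by (apply Rdiv_lt_0_compat; lra). lra. }
  assert (HB : 1 < B). { unfold B. assert (0 < c / t') by (apply Rdiv_lt_0_compat; lra). lra. }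
  assert (HAB : B < A).
  { unfold A, B. apply Rplus_lt_compat_l. unfold Rdiv. apply Rmult_lt_compat_l; [lra|].
    apply Rinv_lt_contravar; nra. }
  assert (h1 : ln A - ln B < A / B - 1).
  { replace (ln A - ln B) with (ln (A / B)).
    - apply ln_lt_sub1. apply Rdiv_lt_0_compat; lra.
      intro E. assert (A = B). { replace A with ((A / B) * B) by (field; lra). rewrite E; ring. } lra.
    - unfold Rdiv. rewrite ln_mult, ln_Rinv; try lra. apply Rinv_0_lt_compat; lra. }
  assert (h2 : - ln B <= / B - 1).
  { rewrite <- ln_Rinv by lra. apply ln_le_sub1. apply Rinv_0_lt_compat; lra. }
  assert (Heq : t * (A / B - 1) = (t' - t) * (1 - / B)).
  { unfold A, B. field. split; [lra|]. split; [lra|].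
    intro E. assert (0 < c / t') by (apply Rdiv_lt_0_compat; lra).
    replace (t' + c) with (t' * (1 + c/t')) in E by (field; lra). nra. }
  assert (t * (ln A - ln B) < t * (A / B - 1)) by (apply Rmult_lt_compat_l; lra).
  assert ((t' - t) * (- ln B) <= (t' - t) * (/ B - 1)) by (apply Rmult_le_compat_l; lra).
  nra.
Qed.

Lemma ln2_pos : 0 < ln 2.
Proof. pose proof ln_lt_2; lra. Qed.

Lemma rate_pos_tau a E tau : rate a E tau <> 0 -> 0 < tau.
Proof. unfold rate. destruct (Rlt_dec 0 tau); [auto|]. intros H; lra. Qed.

Lemma rate_E0 a tau : rate a 0 tau = 0.
Proof. unfold rate, log2. destruct (Rlt_dec 0 tau); [|auto].
  replace (1 + a * 0 / tau) with 1 by (field; lra). rewrite ln_1. unfold Rdiv; ring. Qed.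

Lemma rate_mono a E t t' : 0 < a -> 0 < E -> 0 < t -> t < t' -> rate a E t < rate a E t'.
Proof.
  intros Ha HE Ht Htt. unfold rate, log2.
  destruct (Rlt_dec 0 t); [|lra]. destruct (Rlt_dec 0 t'); [|lra].
  pose proof ln2_pos as Hl2.
  assert (H := key_mono (a * E) t t' ltac:(nra) Ht Htt).
  unfold Rdiv in *.
  replace (t * (ln (1 + a * E * / t) * / ln 2)) with ((t * ln (1 + a * E * / t)) * / ln 2) by ring.
  replace (t' * (ln (1 + a * E * / t') * / ln 2)) with ((t' * ln (1 + a * E * / t')) * / ln 2) by ring.
  apply Rmult_lt_compat_r. apply Rinv_0_lt_compat; lra. exact H.
Qed.

Lemma rate_pos a E t : 0 < a -> 0 < E -> 0 < t -> 0 < rate a E t.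
Proof.
  intros Ha HE Ht. unfold rate, log2. destruct (Rlt_dec 0 t); [|lra].
  pose proof ln2_pos.
  assert (0 < a * E / t) by (apply Rdiv_lt_0_compat; nra).
  assert (0 < ln (1 + a * E / t)). { rewrite <- ln_1. apply ln_increasing; lra. }
  apply Rmult_lt_0_compat; [lra|]. apply Rdiv_lt_0_compat; lra.
Qed.

Lemma rate_scale a E t l : 0 < l -> 0 < t -> rate a (l * E) (l * t) = l * rate a E t.
Proof.
  intros Hl Ht. unfold rate.
  destruct (Rlt_dec 0 (l * t)) as [h|h]; [|exfalso; apply h; nra].
  destruct (Rlt_dec 0 t); [|lra].
  replace (a * (l * E) / (l * t)) with (a * E / t) by (field; lra). ring.
Qed.

Lemma sum1_le f g n : (forall j, (1 <= j <= n)%nat -> f j <= g j) -> sum1 f n <= sum1 g n.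
Proof.
  induction n; simpl; intros H; [lra|].
  assert (sum1 f n <= sum1 g n) by (apply IHn; intros; apply H; lia).
  assert (f (S n) <= g (S n)) by (apply H; lia). lra.
Qed.

Lemma sum1_const c n : sum1 (fun _ => c) n = INR n * c.
Proof. induction n; simpl sum1; [simpl; ring|]. rewrite IHn, S_INR; ring. Qed.

Lemma sum1_ext f g n : (forall j, (1 <= j <= n)%nat -> f j = g j) -> sum1 f n = sum1 g n.
Proof.
  induction n; simpl; intros H; [auto|].
  rewrite IHn by (intros; apply H; lia). rewrite H by lia. auto.
Qed.

Lemma sum1_plus f d n : sum1 (fun j => f j + d) n = sum1 f n + INR n * d.
Proof. induction n; simpl sum1; [simpl; ring|]. rewrite IHn, S_INR; ring. Qed.

Lemma sum1_minus_pt f i x n : (1 <= i <= n)%nat ->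
  sum1 (fun j => f j - (if Nat.eqb j i then x else 0)) n = sum1 f n - x.
Proof.
  induction n; intros Hi; [lia|].
  change (sum1 (fun j => f j - (if Nat.eqb j i then x else 0)) n + (f (S n) - (if Nat.eqb (S n) i then x else 0)) = sum1 f n + f (S n) - x).
  destruct (Nat.eq_dec i (S n)) as [->|ne].
  - replace (if Nat.eqb (S n) (S n) then x else 0) with x by (rewrite Nat.eqb_refl; auto).
    rewrite (sum1_ext (fun j => f j - (if Nat.eqb j (S n) then x else 0)) f). ring. intros j Hj.
    destruct (Nat.eqb_spec j (S n)); [lia|ring].
  - rewrite IHn by lia. destruct (Nat.eqb_spec (S n) i); [lia|ring].
Qed.

Fixpoint minr (f : nat -> R) (n : nat) : R :=
  match n with O => f 1%nat | S m => Rmin (minr f m) (f (S m)) end.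

Lemma minr_le f n j : (1 <= j <= n)%nat -> minr f n <= f j.
Proof.
  induction n; intros Hj; [lia|]. simpl.
  destruct (Nat.eq_dec j (S n)) as [->|ne]. apply Rmin_r.
  eapply Rle_trans; [apply Rmin_l|]. apply IHn; lia.
Qed.

Lemma minr_gt f n t : (1 <= n)%nat -> (forall j, (1 <= j <= n)%nat -> t < f j) -> t < minr f n.
Proof.
  induction n; intros Hn H; [lia|]. simpl.
  destruct n.
  - simpl. apply Rmin_glb_lt; apply H; lia.
  - apply Rmin_glb_lt. apply IHn; [lia|intros; apply H; lia]. apply H; lia.
Qed.

Theorem theorem5 (K : nat) (Emax PB Gamma sigma2 : R) (Eb eta h g : nat -> R)
  (HK : (1 <= K)%nat) (HEmax : 0 < Emax) (HPB : 0 < PB)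
  (HGamma : 0 < Gamma) (Hsigma2 : 0 < sigma2)
  (HEb : forall i, (1 <= i <= K)%nat -> 0 <= Eb i)
  (Heta : forall i, (1 <= i <= K)%nat -> 0 < eta i < 1)
  (Hh : forall i, (1 <= i <= K)%nat -> 0 < h i)
  (Hg : forall i, (1 <= i <= K)%nat -> 0 < g i)
  (tstar : R) (Estar taustar : nat -> R) :
  optimal K Emax PB Gamma sigma2 Eb eta h g tstar Estar taustar ->
  forall i, (1 <= i <= K)%nat ->
    rate (g i / (Gamma * sigma2)) (Estar i) (taustar i) = tstar.
Proof.
  intros [Hfeas Hopt] i Hi.
  set (c := fun j => g j / (Gamma * sigma2)).
  assert (Hc : forall j, (1 <= j <= K)%nat -> 0 < c j).
  { intros j Hj. unfold c. apply Rdiv_lt_0_compat. now apply Hg. nra. }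
  change (rate (c i) (Estar i) (taustar i) = tstar).
  pose proof Hfeas as [Hr [Hsum [HEs [Htau HEb']]]].
  assert (HKpos : 0 < INR K) by (apply lt_0_INR; lia).
  assert (Htpos : 0 < tstar).
  { set (tau0 := fun j => if Nat.eqb j 0 then 1/2 else / (2 * INR K)).
    set (E0 := fun j => Rmin (Emax / INR K) (Eb j + eta j * PB * h j * (1/2))).
    set (t0 := minr (fun j => rate (c j) (E0 j) (tau0 j)) K).
    assert (HE0 : forall j, (1 <= j <= K)%nat -> 0 < E0 j).
    { intros j Hj. unfold E0. apply Rmin_glb_lt. apply Rdiv_lt_0_compat; lra.
      pose proof (HEb j Hj). pose proof (Heta j Hj). pose proof (Hh j Hj).
      assert (0 < eta j * PB * h j) by (apply Rmult_lt_0_compat; [nra|lra]). lra. }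
    assert (Htau0 : forall j, (1 <= j <= K)%nat -> tau0 j = / (2 * INR K)).
    { intros j Hj. unfold tau0. destruct (Nat.eqb_spec j 0); [lia|auto]. }
    assert (Hf : feasible K Emax PB Gamma sigma2 Eb eta h g t0 E0 tau0).
    { repeat split.
      - intros j Hj. apply Rle_ge. apply (minr_le (fun j => rate (c j) (E0 j) (tau0 j))). auto.
      - rewrite (sum1_ext _ (fun _ => / (2 * INR K))) by exact Htau0.
        rewrite sum1_const. unfold tau0; simpl. right. field. lra.
      - apply Rle_trans with (sum1 (fun _ => Emax / INR K) K).
        apply sum1_le. intros j Hj. unfold E0. apply Rmin_l.
        rewrite sum1_const. right. field. lra.
      - intros j Hj. unfold tau0. destruct (Nat.eqb j 0). lra.
        left. apply Rinv_0_lt_compat. lra.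
      - left. now apply HE0.
      - unfold E0. eapply Rle_trans; [apply Rmin_r|]. unfold tau0; simpl. lra. }
    pose proof (Hopt _ _ _ Hf).
    assert (0 < t0).
    { apply minr_gt; auto. intros j Hj. apply rate_pos. now apply Hc. now apply HE0.
      rewrite Htau0 by auto. apply Rinv_0_lt_compat. lra. }
    lra. }
  assert (HtauP : forall j, (1 <= j <= K)%nat -> 0 < taustar j).
  { intros j Hj. apply (rate_pos_tau (c j) (Estar j)). pose proof (Hr j Hj). fold (c j) in H. lra. }
  assert (HEP : forall j, (1 <= j <= K)%nat -> 0 < Estar j).
  { intros j Hj. destruct (HEb' j Hj) as [H0 _]. destruct H0 as [H0|H0]; auto.
    pose proof (Hr j Hj). fold (c j) in H. rewrite <- H0, rate_E0 in H. lra. }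
  pose proof (Hr i Hi) as Hri. fold (c i) in Hri.
  set (r := rate (c i) (Estar i) (taustar i)) in *.
  destruct (Rle_lt_dec r tstar) as [Hle|Hgt]; [lra|exfalso].
  set (lam := (tstar + r) / (2 * r)).
  assert (Hlam0 : 0 < lam) by (unfold lam; apply Rdiv_lt_0_compat; lra).
  assert (Hlam1 : lam < 1).
  { unfold lam. apply (Rmult_lt_reg_r (2 * r)); [lra|]. unfold Rdiv.
    rewrite Rmult_assoc, Rinv_l by lra. lra. }
  assert (Hlamr : tstar < lam * r).
  { unfold lam. replace ((tstar + r) / (2 * r) * r) with ((tstar + r) / 2) by (field; lra). lra. }
  pose proof (HtauP i Hi) as Hti. pose proof (HEP i Hi) as HEi.
  set (d := (1 - lam) * taustar i / INR K).
  assert (Hd : 0 < d) by (unfold d; apply Rdiv_lt_0_compat; [nra|lra]).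
  set (tau' := fun j => if Nat.eqb j 0 then taustar 0%nat else if Nat.eqb j i then lam * taustar i else taustar j + d).
  set (E' := fun j => if Nat.eqb j i then lam * Estar i else Estar j).
  set (nr := fun j => rate (c j) (E' j) (tau' j)).
  set (t' := minr nr K).
  assert (Hnr : forall j, (1 <= j <= K)%nat -> tstar < nr j).
  { intros j Hj. unfold nr, E', tau'. destruct (Nat.eqb_spec j 0); [lia|].
    destruct (Nat.eqb_spec j i) as [->|ne].
    - rewrite rate_scale by lra. exact Hlamr.
    - pose proof (Hr j Hj). fold (c j) in H.
      pose proof (rate_mono (c j) (Estar j) (taustar j) (taustar j + d) (Hc j Hj) (HEP j Hj) (HtauP j Hj) ltac:(lra)).
      lra. }
  assert (Hf : feasible K Emax PB Gamma sigma2 Eb eta h g t' E' tau').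
  { repeat split.
    - intros j Hj. apply Rle_ge. apply (minr_le nr). auto.
    - assert (Hs : sum1 tau' K = sum1 (fun j => (taustar j + d) - (if Nat.eqb j i then (1 - lam) * taustar i + d else 0)) K).
      { apply sum1_ext. intros j Hj. unfold tau'. destruct (Nat.eqb_spec j 0); [lia|].
        destruct (Nat.eqb_spec j i) as [->|ne]; ring. }
      rewrite Hs, sum1_minus_pt by auto. rewrite sum1_plus.
      assert (INR K * d = (1 - lam) * taustar i) by (unfold d; field; lra).
      unfold tau'; simpl. lra.
    - eapply Rle_trans; [|exact HEs]. apply sum1_le. intros j Hj. unfold E'.
      destruct (Nat.eqb_spec j i) as [->|ne]; nra.
    - intros j Hj. unfold tau'. destruct (Nat.eqb_spec j 0) as [->|n0].
      apply Htau. lia.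
      destruct (Nat.eqb_spec j i) as [->|ne]. nra.
      pose proof (Htau j Hj). lra.
    - unfold E'. destruct (Nat.eqb_spec i0 i) as [->|ne]. nra. now destruct (HEb' i0 H).
    - unfold E', tau'. simpl. destruct (HEb' i0 H) as [H1 H2].
      destruct (Nat.eqb_spec i0 i) as [->|ne]; nra. }
  pose proof (Hopt _ _ _ Hf).
  assert (tstar < t') by (apply minr_gt; auto).
  lra.
Qed.
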